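(* Let $n\ge 4$ and let $G$ be a graph having the maximum value of $cM_2$ among all connected graphs of order $n$. Then no two vertices of minimum degree in $G$ are adjacent.
   Context: All graphs are finite and simple. For a graph $G$ and a vertex $u$, $d_u(G)$ denotes the degree of $u$ in $G$. The complementary second Zagreb index of $G$ is $cM_2(G)=\sum_{uv\in E(G)}\left|(d_u(G))^2-(d_v(G))^2\right|$. *)

(* Defs.v *)
From mathcomp Require Import all_boot.
Set Implicit Arguments. Unset Strict Implicit. Unset Printing Implicit Defensive.

Definition simple_graph (n : nat) (e : rel 'I_n) : Prop :=
  irreflexive e /\ symmetric e.

Definition deg (n : nat) (e : rel 'I_n) (u : 'I_n) : nat := #|[set v | e u v]|.

Definition connected_graph (n : nat) (e : rel 'I_n) : Prop :=
  forall u v : 'I_n, connect e u v.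

Definition absdiff (a b : nat) : nat := (a - b) + (b - a).

(* complementary second Zagreb index: sum over edges uv (each unordered edge
   counted once, via u < v) of |d_u^2 - d_v^2| *)
Definition cM2 (n : nat) (e : rel 'I_n) : nat :=
  \sum_(u : 'I_n) \sum_(v : 'I_n | (u < v) && e u v)
     absdiff (deg e u ^ 2) (deg e v ^ 2).

Definition is_min_deg_vertex (n : nat) (e : rel 'I_n) (u : 'I_n) : Prop :=
  forall w : 'I_n, deg e u <= deg e w.

(* Main.v *)
Require Import Defs.
From mathcomp Require Import all_boot.
From mathcomp Require Import zify.
Set Implicit Arguments. Unset Strict Implicit. Unset Printing Implicit Defensive.

Lemma absdiff_sym a b : absdiff a b = absdiff b a.
Proof. rewrite /absdiff; lia. Qed.

Lemma absdiff_mono p' p q q' : p' <= p -> p <= q -> q <= q' ->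
  absdiff (p^2) (q^2) <= absdiff (p'^2) (q'^2).
Proof. rewrite /absdiff => h1 h2 h3; nia. Qed.

Lemma absdiff_mono' p' p q q' : p' <= p -> p <= q -> q <= q' ->
  absdiff (q^2) (p^2) <= absdiff (q'^2) (p'^2).
Proof. by move=> *; rewrite absdiff_sym [X in _ <= X]absdiff_sym absdiff_mono. Qed.

Lemma absdiff_strict p' p q : p' < p -> p <= q ->
  absdiff (p^2) (q^2) < absdiff (p'^2) (q^2).
Proof. rewrite /absdiff => h1 h2; nia. Qed.

Lemma absdiff_pos p q : p < q -> 0 < absdiff (p^2) (q^2).
Proof. rewrite /absdiff => h1; nia. Qed.

Lemma sum_lt (T : finType) (f g : T -> nat) a :
  (forall i, f i <= g i) -> f a < g a -> \sum_i f i < \sum_i g i.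
Proof.
move=> fg fa; rewrite (bigD1 a) //= [X in _ < X](bigD1 a) //=.
rewrite -addSn leq_add //; apply: leq_sum => i _; exact: fg.
Qed.

Definition F n (e : rel 'I_n) u v :=
  if e u v then absdiff (deg e u ^ 2) (deg e v ^ 2) else 0.

Lemma cM2E n (e : rel 'I_n) : simple_graph e ->
  2 * cM2 e = \sum_u \sum_v F e u v.
Proof.
case=> irr sym.
have Fsym u v : F e u v = F e v u by rewrite /F sym absdiff_sym.
have step u : \sum_v F e u v =
   \sum_(v : 'I_n) (if u < v then F e u v else 0) + \sum_(v : 'I_n) (if v < u then F e u v else 0).
  rewrite (bigID (fun v : 'I_n => u < v)) /=; congr (_ + _); first by rewrite big_mkcond.
  rewrite big_mkcond /=.
  apply: eq_bigr => v _; case: (ltngtP u v) => h //.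
  have -> : v = u by apply: val_inj.
  by rewrite /F irr.
rewrite (eq_bigr _ (fun u _ => step u)) big_split /=.
rewrite [X in _ = _ + X]exchange_big /=.
rewrite [X in _ = _ + X](eq_bigr (fun a : 'I_n => \sum_(b : 'I_n) (if a < b then F e a b else 0))); last first.
  by move=> a _; apply: eq_bigr => b _; rewrite Fsym.
rewrite mul2n -addnn; congr (_ + _);
 rewrite /cM2; apply: eq_bigr => u _; rewrite big_mkcond; apply: eq_bigr => v _;
 by rewrite /F; case: (u < v); case: (e u v).
Qed.

Lemma connect_closed_pred n (e : rel 'I_n) (P : pred 'I_n) x y :
  (forall a b, P a -> e a b -> P b) -> P x -> connect e x y -> P y.
Proof.
move=> cl Px /connectP [p pth ->]; elim: p x Px pth => [|z p IH] x Px //= /andP [exz pz].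
exact: IH (cl _ _ Px exz) pz.
Qed.

Lemma connect_first n (e : rel 'I_n) x y : connect e x y -> x != y ->
  exists z, e x z /\ connect e z y.
Proof.
move=> /connectP [[|z p] /= pth ->]; first by rewrite eqxx.
case/andP: pth => exz pz _; exists z; split=> //; apply/connectP; by exists p.
Qed.

Lemma connect_mono n (e e' : rel 'I_n) x y : (forall a b, e a b -> e' a b) ->
  connect e x y -> connect e' x y.
Proof.
move=> sub; apply: (connect_closed_pred (P := connect e' x)) => //.
move=> a b ha /sub hb; exact: connect_trans ha (connect1 hb).
Qed.

Lemma three_avoid (a b : nat) : exists k, k < 3 /\ k != a /\ k != b.
Proof.
exists (if a == 0 then (if b == 1 then 2 else 1) else if b == 0 then (if a == 1 then 2 else 1) else 0).
by case: a => [|[|a]]; case: b => [|[|b]].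
Qed.

Unset Implicit Arguments.

Theorem proposition2 (n : nat) (e : rel 'I_n) :
  4 <= n ->
  simple_graph e -> connected_graph e ->
  (forall e' : rel 'I_n, simple_graph e' -> connected_graph e' ->
     cM2 e' <= cM2 e) ->
  forall u v : 'I_n, is_min_deg_vertex e u -> is_min_deg_vertex e v ->
    ~~ e u v.
Proof.
move=> n4 sg conn maxe u v umin vmin; apply/negP => euv.
have [irr sym] := sg.
set d := deg e u.
have dv : deg e v = d by apply/eqP; rewrite eqn_leq vmin umin.
have dmin x : d <= deg e x := umin x.
have uv : u != v by apply: contraTneq euv => ->; rewrite irr.
have vu : v != u by rewrite eq_sym.
have key (e' : rel 'I_n) a b : simple_graph e' -> connected_graph e' ->
   (forall x y, F e x y <= F e' x y) -> F e a b < F e' a b -> False.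
  move=> s' c' le lt; have := maxe e' s' c'.
  rewrite -(leq_pmul2l (_ : 0 < 2)) // !cM2E // leqNgt => /negP; apply.
  apply: (sum_lt (a := a)) => [x|]; last exact: sum_lt lt.
  by apply: leq_sum => y _.
have Fle (e' : rel 'I_n) x y : (e x y -> e' x y) ->
    (e x y -> absdiff (deg e x ^2) (deg e y ^2) <= absdiff (deg e' x ^2) (deg e' y ^2)) ->
    F e x y <= F e' x y.
  move=> h1 h2; rewrite /F; case exy: (e x y) => //; rewrite h1 //; exact: h2.
have Fuv : absdiff (deg e u ^ 2) (deg e v ^ 2) = 0 by rewrite dv /absdiff subnn.
pose e0 : rel 'I_n := fun a b => e a b && ~~ (((a == u) && (b == v)) || ((a == v) && (b == u))).
have e0sym : symmetric e0.
  move=> a b; rewrite /e0 /= sym; congr andb; congr negb; by case: (a == u); case: (a == v); case: (b == u); case: (b == v).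
have e0irr : irreflexive e0 by move=> a; rewrite /e0 irr.
have e0e a b : e0 a b -> e a b by case/andP.
have cs := sym_connect_sym e0sym.
have Pall x : connect e0 u x || connect e0 v x.
  apply: (connect_closed_pred (P := fun x => connect e0 u x || connect e0 v x)) (conn u x); last first.
    by rewrite connect0.
  move=> a b Pa eab.
  case e0ab: (e0 a b).
    by case/orP: Pa => h; apply/orP; [left|right]; apply: connect_trans h (connect1 e0ab).
  move: e0ab; rewrite /e0 eab /= => /orP [] /andP [_ /eqP ->].
    by rewrite connect0 orbT.
  by rewrite connect0.
have [x0 [x0u x0v]] : exists x0 : 'I_n, x0 != u /\ x0 != v.
  have [k [hk [ku kv]]] := three_avoid u v.
  have kn : k < n by apply: leq_trans hk (leq_trans _ n4).
  exists (Ordinal kn); split; apply/eqP => h; [move: ku | move: kv]; by rewrite -h eqxx.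
case: (boolP (connect e0 u v)) => cuv.
- (* edge uv is not a bridge: delete it *)
  have c0 : connected_graph e0.
    have cu a : connect e0 u a.
      by case/orP: (Pall a) => // h; apply: connect_trans cuv h.
    by move=> a b; apply: connect_trans (cu b); rewrite cs.
  have [w [e0uw _]] := connect_first cuv uv.
  have euw := e0e _ _ e0uw.
  have wv : w != v by move: e0uw; rewrite /e0 eqxx; case: (w == v); rewrite ?andbF.
  have wu : w != u by apply: contraTneq euw => ->; rewrite irr.
  have dpos : 0 < d by apply/card_gt0P; exists w; rewrite inE.
  have deg0 x : x != u -> x != v -> deg e0 x = deg e x.
    move=> xu xv; rewrite /deg; apply: eq_card => t; rewrite !inE /e0.
    by rewrite (negbTE xu) (negbTE xv) /= andbT.
  have deg0u : deg e0 u = d.-1.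
    rewrite /d /deg (cardsD1 v [set t | e u t]) inE euv add1n /=.
    apply: eq_card => t; rewrite !inE /e0 eqxx (negbTE uv) /= orbF.
    by rewrite andbC.
  have deg0v : deg e0 v = d.-1.
    rewrite -dv /deg (cardsD1 u [set t | e v t]) inE (sym v u) euv add1n /=.
    apply: eq_card => t; rewrite !inE /e0 eqxx (negbTE vu) /=.
    by rewrite andbC.
  apply: (key e0 u w); [by [] | exact: c0 | | ].
  + move=> x y; case e0xy: (e0 x y).
      apply: Fle => [_ //|exy].
      have xy : x != y by apply: contraTneq exy => ->; rewrite irr.
      case: (eqVneq x u) => [xu|xu].
        subst x; have yv : y != v by move: e0xy; rewrite /e0 eqxx; case: (y == v); rewrite ?andbF.
        rewrite deg0u deg0 // 1?eq_sym //; apply: absdiff_mono => //; exact: leq_pred.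
      case: (eqVneq x v) => [xv|xv].
        subst x; have yu : y != u by move: e0xy; rewrite /e0 eqxx orbC; case: (y == u); rewrite ?andbF.
        rewrite deg0v deg0 // 1?eq_sym // dv; apply: absdiff_mono => //; exact: leq_pred.
      case: (eqVneq y u) => [yu|yu].
        subst y; rewrite deg0u deg0 //; apply: absdiff_mono' => //; exact: leq_pred.
      case: (eqVneq y v) => [yv|yv].
        subst y; rewrite deg0v deg0 // dv; apply: absdiff_mono' => //; exact: leq_pred.
      by rewrite !deg0.
    rewrite /F; case exy: (e x y) => //.
    move: e0xy; rewrite /e0 exy /= => /orP [] /andP [/eqP -> /eqP ->] //.
    by rewrite Fuv.
    by rewrite absdiff_sym Fuv.
  + rewrite /F euw e0uw deg0u deg0 // 1?eq_sym //; apply: absdiff_strict => //.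
    by rewrite prednK.
-
  have nvu : ~~ connect e0 v u by rewrite cs.
  have [z e0vz] : exists z, e0 v z.
    case/orP: (Pall x0) => h; last first.
      have [w [e0vw _]] := connect_first h (ltac:(by rewrite eq_sym x0v)).
      by exists w.
    have [w [e0uw _]] := connect_first h (ltac:(by rewrite eq_sym x0u)).
    have euw := e0e _ _ e0uw.
    have wv : w != v by move: e0uw; rewrite /e0 eqxx; case: (w == v); rewrite ?andbF.
    have d2 : 2 <= d.
      have <- : #|[set v; w]| = 2 by rewrite cards2 eq_sym wv.
      apply: subset_leq_card; apply/subsetP => t; rewrite !inE => /orP [] /eqP -> //.
    case: (pickP (e0 v)) => [t ht|none]; first by exists t.
    have : deg e v <= 1.
      rewrite -(cards1 u); apply: subset_leq_card; apply/subsetP => t; rewrite !inE => evt.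
      have := none t; rewrite /e0 evt eqxx (negbTE vu) /=.
      by case: (t == u).
    rewrite dv => hd1; move: d2 hd1; clearbody d; lia.
  pose S := [pred t | connect e0 v t && (t != v)].
  have zS : S z.
    rewrite /S /= (connect1 e0vz) /=; apply: contraTneq e0vz => ->; by rewrite e0irr.
  case: (arg_maxnP (deg e) zS) => y /andP [cvy yv] ymax.
  have yu : y != u by apply/eqP => yu; move: nvu; rewrite -yu cvy.
  have nuy : ~~ e u y.
    apply/negP => euy.
    have e0yu : e0 y u by rewrite /e0 (sym y u) euy /= (negbTE yu) (negbTE yv).
    by move: nvu; rewrite (connect_trans cvy (connect1 e0yu)).
  have nyu : ~~ e y u by rewrite sym.
  have nbr_y t : e y t -> t != v -> deg e t <= deg e y.
    move=> eyt tv; apply: ymax; rewrite /S /= tv andbT.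
    have e0yt : e0 y t by rewrite /e0 eyt (negbTE yu) (negbTE yv).
    exact: connect_trans cvy (connect1 e0yt).
  pose e' : rel 'I_n := fun a b => e0 a b || ((a == u) && (b == y)) || ((a == y) && (b == u)).
  have e'irr : irreflexive e'.
    move=> a; rewrite /e' e0irr /=; apply/negP => /orP [] /andP [/eqP -> /eqP h];
      move: yu; by rewrite h eqxx.
  have e'sym : symmetric e'.
    move=> a b; rewrite /e' /= e0sym.
    by case: (e0 b a); case: (a == u); case: (a == y); case: (b == u); case: (b == y).
  have lift a b : e0 a b -> e' a b by rewrite /e' => ->.
  have ce' := sym_connect_sym e'sym.
  have e'uy : e' u y by rewrite /e' !eqxx /= orbT.
  have cuy : connect e' u y := connect1 e'uy.
  have cyv : connect e' y v by rewrite ce'; apply: connect_mono lift cvy.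
  have c' : connected_graph e'.
    have cu a : connect e' u a.
      case/orP: (Pall a) => h; first exact: connect_mono lift h.
      exact: connect_trans (connect_trans cuy cyv) (connect_mono lift h).
    by move=> a b; apply: connect_trans (cu b); rewrite ce'.
  have hNu : d = 1 + #|[set t | e u t] :\ v| by rewrite /d /deg (cardsD1 v) inE euv.
  have hNv : d = 1 + #|[set t | e v t] :\ u| by rewrite -dv /deg (cardsD1 u) inE (sym v u) euv.
  have degu : deg e' u = d.
    rewrite /deg (_ : [set t | e' u t] = y |: ([set t | e u t] :\ v)); last first.
      apply/setP => t; rewrite !inE /e' /e0 eqxx (negbTE uv) (eq_sym u y) (negbTE yu) /=.
      by case: (e u t); case: (t == v); case: (t == y).
    by rewrite cardsU1 !inE (negbTE nuy) andbF /= -hNu.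
  have degv : deg e' v = d.-1.
    rewrite /deg (_ : [set t | e' v t] = [set t | e v t] :\ u); last first.
      apply/setP => t; rewrite !inE /e' /e0 eqxx (negbTE vu) (eq_sym v y) (negbTE yv) /=.
      by case: (e v t); case: (t == u).
    by rewrite hNv.
  have degy : deg e' y = (deg e y).+1.
    rewrite /deg (_ : [set t | e' y t] = u |: [set t | e y t]); last first.
      apply/setP => t; rewrite !inE /e' /e0 eqxx (negbTE yv) (negbTE yu) /=.
      by case: (e y t); case: (t == u); rewrite ?orbF ?orbT.
    by rewrite cardsU1 !inE nyu.
  have degx x : x != u -> x != v -> x != y -> deg e' x = deg e x.
    move=> xu xv xy; rewrite /deg; apply: eq_card => t; rewrite !inE /e' /e0.
    by rewrite (negbTE xu) (negbTE xv) (negbTE xy) /= andbT !orbF.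
  have dy : d <= deg e y := dmin y.
  apply: (key e' u y); [by [] | exact: c' | | ].
  + move=> x b; case e0xb: (e0 x b).
      apply: Fle => [_|exb]; first exact: lift.
      have xb : x != b by apply: contraTneq exb => ->; rewrite irr.
      case: (eqVneq x u) => [xu|xu].
        subst x.
        have bv : b != v by move: e0xb; rewrite /e0 eqxx; case: (b == v); rewrite ?andbF.
        have bby : b != y by apply: contraNneq nuy => <-.
        by rewrite degu (degx b) // eq_sym.
      case: (eqVneq x v) => [xv|xv].
        subst x.
        have bu : b != u by move: e0xb; rewrite /e0 eqxx orbC; case: (b == u); rewrite ?andbF.
        rewrite degv dv.
        case: (eqVneq b y) => [->|bby].
          by rewrite degy; apply: absdiff_mono => //; exact: leq_pred.
        have bv : b != v by rewrite eq_sym.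
        by rewrite (degx b bu bv bby); apply: absdiff_mono => //; exact: leq_pred.
      case: (eqVneq x y) => [xy|xy].
        subst x.
        have bu : b != u by apply: contraNneq nyu => <-.
        case: (eqVneq b v) => [->|bv].
          rewrite degy degv dv; apply: absdiff_mono' => //; exact: leq_pred.
        have bby : b != y by rewrite eq_sym.
        rewrite degy (degx b bu bv bby); apply: absdiff_mono' => //; exact: nbr_y.
      rewrite (degx x) //.
      case: (eqVneq b u) => [->|bu]; first by rewrite degu.
      case: (eqVneq b v) => [->|bv].
        rewrite degv dv; apply: absdiff_mono' => //; exact: leq_pred.
      case: (eqVneq b y) => [eby|bby].
        subst b.
        rewrite degy; apply: absdiff_mono => //; apply: nbr_y => //; by rewrite sym.
      by rewrite degx.
    rewrite /F; case exb: (e x b) => //.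
    move: e0xb; rewrite /e0 exb /= => /orP [] /andP [/eqP -> /eqP ->] //.
    by rewrite Fuv.
    by rewrite absdiff_sym Fuv.
  + rewrite /F (negbTE nuy) e'uy degu degy; exact: absdiff_pos.
Qed.
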